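(* For every positive integer $k$ there exist $\delta_k>0$ and $\rho_k>0$ depending only on $k$ such that: if $s<t$ are real and $f:[s,t)\to\mathbb{R}$ is $k$-regular, then there is an interval $J\subset[s,t)$ with $|J|>\delta_k(t-s)$ and $\inf_{x\in J}|f'(x)|\ge\rho_k\sup_{x\in[s,t)}|f'(x)|$.
   Context: For an integer $k\ge0$, a map $f:[s,t)\to\mathbb{R}$ is $k$-regular if $f$ is $C^k$ and $\sup_{x\in[s,t)}|f^{(k)}(x)|\le2\inf_{x\in[s,t)}|f^{(k)}(x)|$. *)

(* Defs.v *)
From Stdlib Require Import Reals Lra.
Open Scope R_scope.

Definition in_Ico (s t x : R) : Prop := s <= x /\ x < t.

Definition deriv_within (s t : R) (g : R -> R) (x l : R) : Prop :=
  forall eps, 0 < eps -> exists del, 0 < del /\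
    forall y, in_Ico s t y -> 0 < Rabs (y - x) < del ->
      Rabs ((g y - g x) / (y - x) - l) < eps.

Definition cont_within (s t : R) (g : R -> R) (x : R) : Prop :=
  forall eps, 0 < eps -> exists del, 0 < del /\
    forall y, in_Ico s t y -> Rabs (y - x) < del -> Rabs (g y - g x) < eps.

Definition Ck_derivs (k : nat) (f : R -> R) (s t : R) (D : nat -> R -> R)
  : Prop :=
  (forall x, in_Ico s t x -> D 0%nat x = f x) /\
  (forall j x, (j < k)%nat -> in_Ico s t x -> deriv_within s t (D j) x (D (S j) x)) /\
  (forall x, in_Ico s t x -> cont_within s t (D k) x).

(* f is k-regular on [s,t) (with derivatives D):
   C^k and sup |f^(k)| <= 2 inf |f^(k)| over [s,t), written pointwise. *)
Definition k_regular_with (k : nat) (f : R -> R) (s t : R) (D : nat -> R -> R)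
  : Prop :=
  Ck_derivs k f s t D /\
  (forall x y, in_Ico s t x -> in_Ico s t y -> Rabs (D k x) <= 2 * Rabs (D k y)).

Definition k_regular (k : nat) (f : R -> R) (s t : R) : Prop :=
  exists D, k_regular_with k f s t D.

(* Main.v *)
Require Import Defs.
From Stdlib Require Import Reals Lra Lia Classical.
Open Scope R_scope.

Lemma to_dpl s t g x l : s < x < t -> deriv_within s t g x l -> derivable_pt_lim g x l.
Proof.
  intros Hx Hd eps He. destruct (Hd eps He) as [del [Hdel H]].
  assert (Hm : 0 < Rmin del (Rmin (x - s) (t - x))).
  { repeat apply Rmin_pos; lra. }
  exists (mkposreal _ Hm). intros h Hh Hlt. simpl in Hlt.
  assert (h1 := Rmin_l del (Rmin (x - s) (t - x))).
  assert (h2 := Rmin_r del (Rmin (x - s) (t - x))).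
  assert (h3 := Rmin_l (x - s) (t - x)).
  assert (h4 := Rmin_r (x - s) (t - x)).
  assert (Hab := Rabs_pos h).
  revert Hlt; unfold Rabs; destruct (Rcase_abs h); intro Hlt.
  - specialize (H (x + h)). replace (x + h - x) with h in H by ring.
    apply H. unfold in_Ico; lra. unfold Rabs; destruct (Rcase_abs h); lra.
  - specialize (H (x + h)). replace (x + h - x) with h in H by ring.
    apply H. unfold in_Ico; lra. unfold Rabs; destruct (Rcase_abs h); lra.
Qed.

Lemma mvt s t g g' u v : s < u -> u < v -> v < t ->
  (forall x, in_Ico s t x -> deriv_within s t g x (g' x)) ->
  exists c, u < c < v /\ g v - g u = g' c * (v - u).
Proof.
  intros H1 H2 H3 Hd.
  destruct (MVT_cor2 g g' u v H2) as [c [Hc1 Hc2]].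
  { intros c Hc. apply (to_dpl s t). lra. apply Hd. unfold in_Ico; lra. }
  exists c; split; [lra|exact Hc1].
Qed.

Lemma upper s t g g' K x y :
  (forall x, in_Ico s t x -> deriv_within s t g x (g' x)) ->
  (forall x, in_Ico s t x -> Rabs (g' x) <= K) ->
  in_Ico s t x -> s < y < t -> Rabs (g x - g y) <= K * Rabs (x - y).
Proof.
  intros Hd HK Hx Hy.
  assert (HK0 : 0 <= K) by (eapply Rle_trans; [apply Rabs_pos| apply (HK y); unfold in_Ico; lra]).
  assert (gen : forall u v, s < u -> u <= v -> v < t -> Rabs (g v - g u) <= K * (v - u)).
  { intros u v Hu Huv Hv. destruct (Req_dec u v) as [->|Hne].
    - replace (g v - g v) with 0 by ring. rewrite Rabs_R0. nra.
    - destruct (mvt s t g g' u v) as [c [Hc Heq]]; try lra; auto.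
      rewrite Heq, Rabs_mult, (Rabs_right (v - u)) by lra.
      apply Rmult_le_compat_r; [lra|]. apply HK. unfold in_Ico; lra. }
  unfold in_Ico in Hx; destruct Hx as [Hx1 Hx2].
  destruct (Rle_lt_dec y x) as [Hyx|Hyx].
  - rewrite (Rabs_right (x - y)) by lra. apply gen; lra.
  - rewrite Rabs_minus_sym, (Rabs_left (x - y)) by lra.
    replace (- (x - y)) with (y - x) by ring.
    destruct (Req_dec x s) as [Hxs|Hxs]; [|apply gen; lra].
    subst x.
    apply Rnot_lt_le; intro Hc.
    set (eps := Rabs (g y - g s) - K * (y - s)).
    assert (Heps : 0 < eps) by (unfold eps; lra).
    destruct (Hd s ltac:(unfold in_Ico; lra) 1 Rlt_0_1) as [del [Hdel Hdd]].
    set (B := Rabs (g' s) + 1).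
    assert (HB : 0 < B) by (unfold B; assert (h:=Rabs_pos (g' s)); lra).
    set (h := Rmin (del / 2) (Rmin ((y - s) / 2) (eps / (2 * B)))).
    assert (Hh : 0 < h) by (unfold h; repeat apply Rmin_pos; try lra; apply Rdiv_lt_0_compat; lra).
    assert (h1 := Rmin_l (del/2) (Rmin ((y - s) / 2) (eps / (2 * B)))).
    assert (h2 := Rmin_r (del/2) (Rmin ((y - s) / 2) (eps / (2 * B)))).
    assert (h3 := Rmin_l ((y - s) / 2) (eps / (2 * B))).
    assert (h4 := Rmin_r ((y - s) / 2) (eps / (2 * B))).
    fold h in h1, h2.
    specialize (Hdd (s + h)).
    replace (s + h - s) with h in Hdd by ring.
    rewrite (Rabs_right h) in Hdd by lra.
    assert (Hq : Rabs ((g (s + h) - g s) / h - g' s) < 1) by (apply Hdd; unfold in_Ico; lra).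
    assert (Hq2 : Rabs (g (s + h) - g s) <= B * h).
    { replace (g (s + h) - g s) with (((g (s + h) - g s) / h - g' s) * h + g' s * h) by (field; lra).
      eapply Rle_trans; [apply Rabs_triang|].
      rewrite !Rabs_mult, (Rabs_right h) by lra. unfold B. nra. }
    assert (Hq3 : Rabs (g y - g (s + h)) <= K * (y - (s + h))) by (apply gen; lra).
    assert (Hq4 : B * h <= eps / 2).
    { assert (B * (eps / (2 * B)) = eps / 2) by (field; lra). nra. }
    assert (Htri : Rabs (g y - g s) <= Rabs (g y - g (s + h)) + Rabs (g (s + h) - g s)).
    { replace (g y - g s) with ((g y - g (s + h)) + (g (s + h) - g s)) by ring. apply Rabs_triang. }
    unfold eps in *. nra.
Qed.

Definition chain (n : nat) (E : nat -> R -> R) (s t : R) : Prop :=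
  (forall j x, (j < n)%nat -> in_Ico s t x -> deriv_within s t (E j) x (E (S j) x)) /\
  (forall x, in_Ico s t x -> cont_within s t (E n) x) /\
  (forall x y, in_Ico s t x -> in_Ico s t y -> Rabs (E n x) <= 2 * Rabs (E n y)).

Definition P (n : nat) : Prop :=
  exists delta rho : R, 0 < delta /\ 0 < rho /\
    forall s t (E : nat -> R -> R), s < t -> chain n E s t ->
      exists a b : R, s <= a /\ a < b /\ b <= t /\ b - a > delta * (t - s) /\
        (forall y x, a < y < b -> in_Ico s t x -> rho * Rabs (E 0%nat x) <= Rabs (E 0%nat y)).

Lemma P0 : P 0.
Proof.
  exists (1/2), (1/2). split; [lra|split; [lra|]].
  intros s t E Hst [_ [_ Hr]]. exists s, t. split; [lra|split; [lra|split; [lra|split; [lra|]]]].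
  intros y x Hy Hx. assert (H := Hr x y Hx ltac:(unfold in_Ico; lra)). lra.
Qed.

Lemma PS n : P n -> P (S n).
Proof.
  intros [delta [rho [Hd [Hr HP]]]].
  exists (delta / 4), (rho * rho * delta / (rho * rho * delta + 8)).
  assert (HK : 0 < rho * rho * delta) by (apply Rmult_lt_0_compat; [nra|lra]).
  split; [lra|split; [apply Rdiv_lt_0_compat; lra|]].
  intros s t E Hst [Hdv [Hc Hreg]].
  destruct (HP s t (fun j => E (S j)) Hst) as [a [b [Ha [Hab [Hb [Hlen HJ]]]]]].
  { split; [|split; [exact Hc|exact Hreg]].
    intros j x Hj Hx. apply Hdv; [lia|exact Hx]. }
  simpl in HJ.
  set (g := E 0%nat). set (g' := E 1%nat).
  assert (Hder : forall x, in_Ico s t x -> deriv_within s t g x (g' x)).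
  { intros x Hx. apply Hdv; [lia|exact Hx]. }
  set (l := b - a). set (y0 := (a + b) / 2).
  assert (Hy0 : in_Ico s t y0) by (unfold in_Ico, y0; lra).
  set (A := Rabs (g' y0)).
  assert (HA0 : 0 <= A) by apply Rabs_pos.
  assert (HupA : forall x, in_Ico s t x -> Rabs (g' x) <= A / rho).
  { intros x Hx. assert (H := HJ y0 x ltac:(unfold y0; lra) Hx).
    apply (Rmult_le_reg_l rho); [lra|]. replace (rho * (A / rho)) with A by (field; lra). exact H. }
  assert (HlowJ : forall y, a < y < b -> rho * A <= Rabs (g' y)).
  { intros y Hy. apply HJ; auto. }
  assert (Hlow : forall u v, a < u -> u < v -> v < b -> rho * A * (v - u) <= Rabs (g v - g u)).
  { intros u v H1 H2 H3. destruct (mvt s t g g' u v) as [c [Hc1 Hc2]]; try lra; auto.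
    rewrite Hc2, Rabs_mult, (Rabs_right (v - u)) by lra.
    apply Rmult_le_compat_r; [lra|]. apply HlowJ; lra. }
  set (eps := rho * A * l / 8).
  assert (Hquart : (forall y, a < y < a + l / 4 -> eps <= Rabs (g y)) \/
                   (forall y, b - l / 4 < y < b -> eps <= Rabs (g y))).
  { destruct (Classical_Prop.classic (forall y, a < y < a + l / 4 -> eps <= Rabs (g y))) as [H|H];
      [left; exact H|right].
    apply Classical_Pred_Type.not_all_ex_not in H. destruct H as [u Hu].
    apply Classical_Prop.imply_to_and in Hu. destruct Hu as [Hu1 Hu2].
    apply Rnot_le_lt in Hu2.
    intros v Hv. apply Rnot_lt_le. intro Hv2.
    assert (H := Hlow u v ltac:(lra) ltac:(unfold l in *; lra) ltac:(lra)).
    assert (Htri : Rabs (g v - g u) <= Rabs (g v) + Rabs (g u)).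
    { unfold Rminus. eapply Rle_trans; [apply Rabs_triang|]. rewrite Rabs_Ropp. lra. }
    assert (0 <= rho * A * l) by (unfold l; apply Rmult_le_pos; nra).
    unfold eps, l in *. nra. }
  assert (Hup : forall x y, in_Ico s t x -> a < y < b -> Rabs (g x) <= Rabs (g y) + A / rho * (t - s)).
  { intros x y Hx Hy.
    assert (H := upper s t g g' (A / rho) x y Hder HupA Hx ltac:(lra)).
    assert (Hxy : Rabs (x - y) <= t - s).
    { unfold in_Ico in Hx. unfold Rabs; destruct (Rcase_abs (x - y)); lra. }
    assert (0 <= A / rho) by (unfold Rdiv; apply Rmult_le_pos; [lra|apply Rlt_le, Rinv_0_lt_compat; lra]).
    assert (Htri : Rabs (g x) <= Rabs (g x - g y) + Rabs (g y)).
    { replace (g x) with ((g x - g y) + g y) at 1 by ring. apply Rabs_triang. }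
    nra. }
  assert (Hfin : forall x y, in_Ico s t x -> a < y < b -> eps <= Rabs (g y) ->
     rho * rho * delta / (rho * rho * delta + 8) * Rabs (g x) <= Rabs (g y)).
  { intros x y Hx Hy He.
    assert (H1 := Hup x y Hx Hy).
    assert (H2 : rho * A * delta * (t - s) <= 8 * Rabs (g y)).
    { unfold eps, l in He. assert (0 <= rho * A) by nra. nra. }
    assert (H3 : rho * rho * delta * (A / rho * (t - s)) = rho * A * delta * (t - s)) by (field; lra).
    assert (H4 : rho * rho * delta * Rabs (g x) <= (rho * rho * delta + 8) * Rabs (g y)).
    { assert (H5 := Rmult_le_compat_l (rho * rho * delta) _ _ (Rlt_le _ _ HK) H1). nra. }
    apply (Rmult_le_reg_l (rho * rho * delta + 8)); [lra|].
    field_simplify; [|lra]. lra. }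
  destruct Hquart as [Hq|Hq].
  - exists a, (a + l / 4). unfold l in *. repeat split; try lra.
    intros y x Hy Hx. apply Hfin; auto; try lra; apply Hq; lra.
  - exists (b - l / 4), b. unfold l in *. repeat split; try lra.
    intros y x Hy Hx. apply Hfin; auto; try lra; apply Hq; lra.
Qed.

Lemma Pall n : P n.
Proof. induction n; [exact P0|apply PS; exact IHn]. Qed.

Theorem mainTheorem18 :
  forall k : nat, (1 <= k)%nat ->
  exists delta rho : R, 0 < delta /\ 0 < rho /\
    forall (s t : R) (f : R -> R) (D : nat -> R -> R),
      s < t -> k_regular_with k f s t D ->
      exists a b : R, s <= a /\ a < b /\ b <= t /\
        b - a > delta * (t - s) /\
        (forall y x, a < y < b -> in_Ico s t x ->
           rho * Rabs (D 1%nat x) <= Rabs (D 1%nat y)).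
Proof.
  intros k Hk. destruct k as [|n]; [lia|].
  destruct (Pall n) as [delta [rho [Hd [Hr HP]]]].
  exists delta, rho. split; [exact Hd|split; [exact Hr|]].
  intros s t f D Hst [[_ [Hdv Hc]] Hreg].
  apply (HP s t (fun j => D (S j)) Hst).
  split; [|split; [exact Hc|exact Hreg]].
  intros j x Hj Hx. apply Hdv; [lia|exact Hx].
Qed.
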